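(* In the setting described in the context, the Dirichlet problem has at most one regular solution: if $u_1,u_2$ are functions that are regular solutions of $\sum_{i=1}^m u_{x_ix_i}+\sum_{k=1}^n\frac{2\alpha_k}{x_k}u_{x_k}=0$ in $\Omega$, continuous on $\overline\Omega$, and both satisfy $u|_\Gamma=\varphi$ on $\overline\Gamma$ and $u|_{x_k=0}=\tau_k(\tilde x_k)$ on $\overline\Gamma_k$ for all $k\in K$, then $u_1=u_2$ on $\overline\Omega$.
   Context: Let $m>2$ and $1\le n\le m$ be integers, $K=\{1,\dots,n\}$, $\alpha=(\alpha_1,\dots,\alpha_n)$ real with $0<2\alpha_k<1$, $\mathbb R_m^{n+}=\{x\in\mathbb R^m:x_1>0,\dots,x_n>0\}$. A regular solution of the equation in a domain is a function with continuous derivatives up to second order there satisfying the equation at every point. $\Gamma$ is a surface in $\mathbb R_m^{n+}$ which together with the hyperplanes $x_1=0,\dots,x_n=0$ bounds a finite domain $\Omega\subset\mathbb R_m^{n+}$; $\Gamma_k$ is the part of $\partial\Omega$ on the hyperplane $x_k=0$. $\Gamma$ is a Lyapunov surface: (i) definite normal at every point; (ii) constants $a,\kappa>0$ with angle between normals at $x,\xi\in\Gamma$ at most $a|x-\xi|^\kappa$; (iii) $\Gamma$ meets the hyperplanes $x_k=0$ at right angles. For $x\in\mathbb R^m$, $\tilde x_k=(x_1,\dots,x_{k-1},x_{k+1},\dots,x_m)$. The data $\varphi\in C(\overline\Gamma)$ and $\tau_k\in C(\overline\Gamma_k)$ are given continuous functions satisfying the matching conditions $\varphi=\tau_k$ on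 $\overline\Gamma\cap\overline\Gamma_k$, $k\in K$. *)

(* Defs.v *)
From HB Require Import structures.
From mathcomp Require Import all_boot all_order all_algebra.
From mathcomp Require Import all_classical all_reals all_analysis.
Set Implicit Arguments. Unset Strict Implicit. Unset Printing Implicit Defensive.
Import Order.TTheory GRing.Theory Num.Theory.
Import numFieldNormedType.Exports.
Local Open Scope classical_set_scope.
Local Open Scope ring_scope.

Section Defs.
Variables (R : realType) (m : nat).

(* i-th coordinate of x (coordinates are 0-indexed: x_{i+1} of the paper is [coord x i]) *)
Definition coord (x : 'rV[R]_m) (i : 'I_m) : R := x ord0 i.

Definition ebase (i : 'I_m) : 'rV[R]_m := delta_mx ord0 i.

Definition pd (f : 'rV[R]_m -> R) (i : 'I_m) : 'rV[R]_m -> R :=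
  fun x => 'D_(ebase i) f x.

Definition dotp (x y : 'rV[R]_m) : R := \sum_(i < m) x ord0 i * y ord0 i.
Definition enorm (x : 'rV[R]_m) : R := Num.sqrt (dotp x x).

(* f has continuous partial derivatives up to order two in the open set A
   (a regular function in A) *)
Definition C2_on (A : set 'rV[R]_m) (f : 'rV[R]_m -> R) : Prop :=
  [/\ (forall x, A x -> {for x, continuous f}),
      (forall i x, A x -> derivable f x (ebase i)),
      (forall i x, A x -> {for x, continuous (pd f i)}),
      (forall i j x, A x -> derivable (pd f i) x (ebase j)) &
      (forall i j x, A x -> {for x, continuous (pd (pd f i) j)})].

Definition orthant n (hnm : (n <= m)%N) : set 'rV[R]_m :=
  [set x | forall k : 'I_n, 0 < coord x (widen_ord hnm k)].

Definition bdry (A : set 'rV[R]_m) : set 'rV[R]_m := closure A `\` interior A.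

Definition Gamma_k n (hnm : (n <= m)%N) (Om : set 'rV[R]_m) (k : 'I_n)
  : set 'rV[R]_m :=
  bdry Om `&` [set x | coord x (widen_ord hnm k) = 0].

Definition tilde n (hnm : (n <= m)%N) (k : 'I_n) (x : 'rV[R]_m) : 'rV[R]_m.-1 :=
  col' (widen_ord hnm k) x.

Definition Lop n (hnm : (n <= m)%N) (alpha : 'I_n -> R) (u : 'rV[R]_m -> R)
  (x : 'rV[R]_m) : R :=
  \sum_(i < m) pd (pd u i) i x
  + \sum_(k < n) (2 * alpha k / coord x (widen_ord hnm k))
                   * pd u (widen_ord hnm k) x.

Definition regular_solution n (hnm : (n <= m)%N) (alpha : 'I_n -> R)
  (Om : set 'rV[R]_m) (u : 'rV[R]_m -> R) : Prop :=
  C2_on Om u /\ forall x, Om x -> Lop hnm alpha u x = 0.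

(* nu is a (unit) normal to the set G at the point x: G has a tangent hyperplane
   at x orthogonal to nu, i.e. <nu, xi - x> = o(|xi - x|) as xi -> x in G *)
Definition is_normal (G : set 'rV[R]_m) (x nu : 'rV[R]_m) : Prop :=
  enorm nu = 1 /\
  forall eps : R, 0 < eps -> exists2 del : R, 0 < del &
    forall xi, G xi -> enorm (xi - x) < del ->
      `|dotp nu (xi - x)| <= eps * enorm (xi - x).

Definition lyapunov n (hnm : (n <= m)%N) (G : set 'rV[R]_m) : Prop :=
  exists nu : 'rV[R]_m -> 'rV[R]_m,
  [/\
      (forall x, G x -> is_normal G x (nu x)),
      (exists a kappa : R, [/\ 0 < a, 0 < kappa &
         forall x xi, G x -> G xi ->
           acos (dotp (nu x) (nu xi)) <= a * (enorm (x - xi)) `^ kappa]) &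
      (* (iii) G meets the hyperplanes x_k = 0 at right angles: the normal
         becomes orthogonal to e_k when approaching a point of the closure of
         G lying on x_k = 0 *)
      (forall (k : 'I_n) x0, closure G x0 -> coord x0 (widen_ord hnm k) = 0 ->
         (fun xi => coord (nu xi) (widen_ord hnm k)) @ within G (nbhs x0) --> 0)].

End Defs.

(* Main.v *)
Require Import Defs.
From HB Require Import structures.
From mathcomp Require Import all_boot all_order all_algebra.
From mathcomp Require Import all_classical all_reals all_analysis.
From mathcomp Require Import lra.
Import Order.TTheory GRing.Theory Num.Theory.
Import numFieldNormedType.Exports.
Local Open Scope classical_set_scope.
Local Open Scope ring_scope.

Lemma test1 (R : realType) (F G : R -> R) (d : R) :
  0 < d ->
  (forall t : R, `|t| < d -> is_derive t 1 F (G t)) ->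
  (forall t : R, `|t| < d -> F t <= F 0) ->
  derivable G 0 1 ->
  G 0 = 0 /\ 'D_1 G 0 <= 0.
Proof.
move=> d0 hF hmax hG.
have itv t : t \in `]-d, d[ -> `|t| < d by rewrite in_itv /= ltr_norml.
have hG0 : G 0 = 0.
  have h0 : is_derive (0:R) (1:R) F 0.
    apply: (@derive1_at_max _ F (-d) d 0).
    - lra.
    - by move=> t /itv /hF [].
    - by rewrite in_itv /=; apply/andP; split; lra.
    - by move=> t /itv /hmax.
  have := hF 0; rewrite normr0 => /(_ d0) h1.
  by rewrite -(@derive_val _ _ _ _ _ _ _ h1) (@derive_val _ _ _ _ _ _ _ h0).
split => //.
rewrite leNgt; apply/negP => hpos.
have := @cvgr_gt R R (0:R)^' (dnbhs_filter _) _ ('D_1 G 0) hG 0 hpos.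
move=> /= [e /= e0 He].
set h := Num.min e d / 2.
have h0 : 0 < h by rewrite /h divr_gt0 // lt_min e0 d0.
have mne : Num.min e d <= e by rewrite ge_min lexx.
have mnd : Num.min e d <= d by rewrite ge_min lexx orbT.
have hd : h < d by rewrite /h; lra.
have he : h < e by rewrite /h; lra.
have Gpos c : 0 < c -> c < h -> 0 < G c.
  move=> c0 ch.
  have := He c; rewrite /ball_ /= sub0r normrN gtr0_norm // => /(_ (lt_trans ch he)).
  rewrite gt_eqF // => /(_ isT).
  by rewrite hG0 subr0 addr0 [_%:A]mulr1 /= pmulr_rgt0 // invr_gt0.
have hdc x : x \in `[0, h] -> `|x| < d.
  rewrite in_itv /= => /andP[x0 xh]; rewrite ger0_norm //; exact: le_lt_trans xh hd.
have hd1 : forall x, x \in `]0, h[ -> is_derive x 1 F (G x).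
  move=> x; rewrite in_itv /= => /andP[x0 xh]; apply: hF.
  by apply: hdc; rewrite in_itv /= !ltW.
have hd2 : {within `[0, h], continuous F}.
  by apply: derivable_within_continuous => x /hdc /hF [].
have [c] := @MVT R F G 0 h h0 hd1 hd2.
rewrite in_itv /= => /andP[c0 ch].
have := Gpos c c0 ch.
have := hmax h; rewrite gtr0_norm // => /(_ hd).
move=> ? ? ?; nra.
Qed.

Section S.
Variables (R : realType) (m : nat).

Lemma line_quot (g : 'rV[R]_m -> R) (y e : 'rV[R]_m) (t : R) :
  (fun h : R => h^-1 *: (((fun s : R => g (s *: e + y)) \o shift t) (h *: 1) - g (t *: e + y)))
  = (fun h : R => h^-1 *: ((g \o shift (t *: e + y)) (h *: e) - g (t *: e + y))).
Proof.
apply: funext => h /=.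
by rewrite [h *: 1]mulr1 scalerDl addrA.
Qed.

Lemma line_derive (g : 'rV[R]_m -> R) (y e : 'rV[R]_m) (t : R) :
  'D_1 (fun s : R => g (s *: e + y)) t = 'D_e g (t *: e + y).
Proof. by rewrite /derive line_quot. Qed.

Lemma line_derivable (g : 'rV[R]_m -> R) (y e : 'rV[R]_m) (t : R) :
  derivable (fun s : R => g (s *: e + y)) t 1 <-> derivable g (t *: e + y) e.
Proof. by rewrite /derivable line_quot. Qed.


Lemma dir_test (u1 u2 : 'rV[R]_m -> R) (Q Q1 : R -> R) (q2 : R)
  (y e : 'rV[R]_m) (d : R) :
  0 < d ->
  (forall t : R, `|t| < d ->
     derivable u1 (t *: e + y) e /\ derivable u2 (t *: e + y) e) ->
  derivable (fun x => 'D_e u1 x) y e -> derivable (fun x => 'D_e u2 x) y e ->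
  (forall t : R, is_derive t 1 Q (Q1 t)) -> is_derive (0:R) 1 Q1 q2 ->
  (forall t : R, `|t| < d ->
     u1 (t *: e + y) - u2 (t *: e + y) + Q t <= u1 y - u2 y + Q 0) ->
  'D_e u1 y - 'D_e u2 y + Q1 0 = 0 /\ 'D_e (fun x => 'D_e u1 x) y - 'D_e (fun x => 'D_e u2 x) y + q2 <= 0.
Proof.
move=> d0 hder hd1 hd2 hQ hQ1 hmax.
pose U1 := fun s : R => u1 (s *: e + y).
pose U2 := fun s : R => u2 (s *: e + y).
pose V1 : R -> R := fun s : R => 'D_e u1 (s *: e + y).
pose V2 : R -> R := fun s : R => 'D_e u2 (s *: e + y).
have ye : 0 *: e + y = y by rewrite scale0r add0r.
have := @test1 R (U1 - U2 + Q) (V1 - V2 + Q1) d d0.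
have hV1 : derivable V1 0 1.
  have := (line_derivable (fun x => 'D_e u1 x) y e 0).2.
  rewrite ye => /(_ hd1). exact.
have hV2 : derivable V2 0 1.
  have := (line_derivable (fun x => 'D_e u2 x) y e 0).2.
  rewrite ye => /(_ hd2). exact.
have f1 := derivableP hV1.
have f2 := derivableP hV2.
have dV1 : 'D_1 V1 0 = 'D_e (fun x => 'D_e u1 x) y.
  by rewrite /V1 (line_derive (fun x => 'D_e u1 x) y e 0) ye.
have dV2 : 'D_1 V2 0 = 'D_e (fun x => 'D_e u2 x) y.
  by rewrite /V2 (line_derive (fun x => 'D_e u2 x) y e 0) ye.
have fG := is_deriveD (is_deriveB f1 f2) hQ1.
case.
- move=> t /hder [h1 h2].
  have h1' : derivable U1 t 1 by apply/line_derivable.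
  have h2' : derivable U2 t 1 by apply/line_derivable.
  have hq : derivable Q t 1 by case: (hQ t).
  have e1 : is_derive t 1 U1 (V1 t) by apply: DeriveDef; [exact: h1' | rewrite /U1 /V1 line_derive].
  have e2 : is_derive t 1 U2 (V2 t) by apply: DeriveDef; [exact: h2' | rewrite /U2 /V2 line_derive].
  have := is_deriveD (is_deriveB e1 e2) (hQ t).
  exact.
- move=> t /hmax H; change (U1 t - U2 t + Q t <= U1 0 - U2 0 + Q 0).
  by rewrite /U1 /U2 ye.
- exact: (@ex_derive _ _ _ _ _ _ _ fG).
move=> H0 H1; split; last first.
  have E := @derive_val _ _ _ _ _ _ _ fG.
  rewrite E dV1 dV2 in H1; exact: H1.
move: H0; change (V1 0 - V2 0 + Q1 0 = 0 -> 'D_e u1 y - 'D_e u2 y + Q1 0 = 0).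
by rewrite /V1 /V2 ye.
Qed.
End S.

Section T.
Variables (R : realType) (m : nat).

Lemma line_open (A : set 'rV[R]_m) (y e : 'rV[R]_m) : open A -> A y ->
  exists2 d : R, 0 < d & forall t : R, `|t| < d -> A (t *: e + y).
Proof.
move=> oA Ay.
have : nbhs y A by apply: open_nbhs_nbhs; split.
move=> /nbhs_ballP [r /= r0 Hr].
exists (r / (`|e| + 1)).
  by rewrite divr_gt0 // ltr_wpDl.
move=> t ht; apply: Hr.
rewrite -ball_normE /ball_ /= opprD addrCA subrr addr0 normrN normrZ.
have he : 0 < `|e| + 1 by rewrite ltr_wpDl.
rewrite ltr_pdivlMr // in ht.
apply: le_lt_trans ht.
rewrite ler_wpM2l //; lra.
Qed.

Lemma closure_bounded (A : set 'rV[R]_m) : bounded_set A -> bounded_set (closure A).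
Proof.
rewrite /= /bounded_near => hA.
move: hA; apply: filterS => M HM.
have cS : closed [set x : 'rV[R]_m | `|x| <= M].
  have hc : continuous (fun x : 'rV[R]_m => `|x|) := @norm_continuous _ _.
  have := (continuous_closedP _).1 hc _ (@closed_le _ M).
  exact.
have e := proj1 (closure_id _) cS.
move=> x cx.
have : closure [set x : 'rV[R]_m | `|x| <= M] x.
  by apply: (closureS _ cx) => z /HM.
by rewrite -e.
Qed.

Lemma qline (i j : 'I_m) (t : R) (y : 'rV[R]_m) :
  (t *: ebase R i + y) ord0 j = t * (j == i)%:R + y ord0 j.
Proof. by rewrite /ebase !mxE eqxx. Qed.

Lemma lin_derive (a b : R) (t : R) :
  is_derive t 1 (horner (a *: 'X + b%:P)) a.
Proof.
have := is_derive_poly (a *: 'X + b%:P) t.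
by rewrite derivD derivZ derivX derivC addr0 hornerZ hornerC mulr1.
Qed.

Lemma cst_derive (a : R) (t : R) :
  is_derive t 1 (horner a%:P) 0.
Proof.
have := is_derive_poly (a%:P) t.
by rewrite derivC hornerC.
Qed.

End T.

Lemma maxp (R : realType) (m n : nat) (hn1 : (1 <= n)%N) (hnm : (n <= m)%N)
  (alpha : 'I_n -> R) (halpha : forall k, 0 < 2 * alpha k)
  (Om : set 'rV[R]_m) (hOm_open : open Om) (hOm_bdd : bounded_set Om)
  (hOm_orth : Om `<=` orthant hnm)
  (u1 u2 : 'rV[R]_m -> R)
  (hu1 : regular_solution hnm alpha Om u1) (hu2 : regular_solution hnm alpha Om u2)
  (hc1 : {within closure Om, continuous u1}) (hc2 : {within closure Om, continuous u2})
  (hb : forall x, closure Om x -> ~ Om x -> u1 x <= u2 x) :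
  forall x, closure Om x -> u1 x <= u2 x.
Proof.
move=> x0 cx0; rewrite leNgt; apply/negP => hlt.
pose k0 : 'I_n := Ordinal hn1.
pose j0 := widen_ord hnm k0.
pose q := fun x : 'rV[R]_m => x ord0 j0.
have hK : compact (closure Om).
  by apply: bounded_closed_compact; [exact: closure_bounded | exact: closed_closure].
have hKne : closure Om !=set0 by exists x0.
have qc : {within closure Om, continuous q}.
  by apply: continuous_subspaceT => x; exact: coord_continuous.
have [xM xMK hM] := EVT_max_rV hKne hK qc.
have [xm xmK hm] := EVT_min_rV hKne hK qc.
set d := u1 x0 - u2 x0.
have d0 : 0 < d by rewrite subr_gt0.
have hMm : q xm <= q xM by apply: hM.
set eps := d / (q xM - q xm + 1).
have eps0 : 0 < eps by rewrite divr_gt0 // ltr_wpDl // subr_ge0.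
have epsb : eps * q xM - eps * q xm < d.
  rewrite -mulrBr /eps mulrAC ltr_pdivrMr ?ltr_wpDl ?subr_ge0 //; nra.
pose v := fun x => u1 x - u2 x + eps * q x.
have vc : {within closure Om, continuous v}.
  have -> : v = (u1 - u2) + eps \*: q by apply/funext => x.
  move=> x; apply: continuousD.
    by apply: continuousB; [exact: hc1 | exact: hc2].
  by apply: continuousZr; exact: qc.
have [y yK hy] := EVT_max_rV hKne hK vc.
have hyK : closure Om y by move/set_mem: yK.
have vy0 : v x0 <= v y by apply: hy; exact/mem_set.
have Omy : Om y.
  have [//|nOy] := pselect (Om y).
  exfalso.
  have h1 := hb y hyK nOy.
  have h2 : eps * q y <= eps * q xM by apply: ler_wpM2l; [exact: ltW | apply: hM; exact/mem_set].
  have h3 : eps * q xm <= eps * q x0 by apply: ler_wpM2l; [exact: ltW | apply: hm; exact/mem_set].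
  move: vy0; rewrite /v -/d; lra.
case: hu1 => [[_ hder1 _ hder21 _] hL1].
case: hu2 => [[_ hder2 _ hder22 _] hL2].
have key i : pd u1 i y - pd u2 i y + eps * (j0 == i)%:R = 0 /\
             pd (pd u1 i) i y - pd (pd u2 i) i y <= 0.
  have [r r0 hr] := @line_open R m Om y (ebase R i) hOm_open Omy.
  set a := eps * (j0 == i)%:R.
  have := @dir_test R m u1 u2 (horner (a *: 'X + (eps * q y)%:P)) (horner a%:P) 0
    y (ebase R i) r r0.
  case.
  - by move=> t /hr Ot; split; [apply: hder1 | apply: hder2].
  - exact: hder21.
  - exact: hder22.
  - by move=> t; rewrite hornerC; exact: lin_derive.
  - exact: cst_derive.
  - move=> t /hr Ot.
    have := hy (t *: ebase R i + y) (mem_set (subset_closure Ot)).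
    rewrite /v /q qline.
    rewrite !(hornerD, hornerZ, hornerX, hornerC) /a mulr0 add0r.
    rewrite mulrDr mulrCA [X in _ <= _ -> _ + (X + _) <= _]mulrC.
    lra.
  by rewrite hornerC addr0 => -> ->; split.
have yj0 : 0 < y ord0 j0 := hOm_orth y Omy k0.
have E : Lop hnm alpha u1 y - Lop hnm alpha u2 y =
    \sum_(i < m) (pd (pd u1 i) i y - pd (pd u2 i) i y) +
    \sum_(k < n) (2 * alpha k / Defs.coord y (widen_ord hnm k)) *
        (pd u1 (widen_ord hnm k) y - pd u2 (widen_ord hnm k) y).
  rewrite /Lop opprD addrACA -!sumrB; congr (_ + _); apply: eq_bigr => k _.
  by rewrite mulrBr.
have S1 : \sum_(i < m) (pd (pd u1 i) i y - pd (pd u2 i) i y) <= 0.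
  rewrite -oppr_ge0 -sumrN; apply: sumr_ge0 => i _; rewrite oppr_ge0.
  exact: (key i).2.
have S2 : \sum_(k < n) (2 * alpha k / Defs.coord y (widen_ord hnm k)) *
        (pd u1 (widen_ord hnm k) y - pd u2 (widen_ord hnm k) y) =
        - ((2 * alpha k0 / y ord0 j0) * eps).
  rewrite (bigD1 k0) //= big1 ?addr0.
    have := (key j0).1; rewrite eqxx mulr1 => /eqP; rewrite addr_eq0 => /eqP ->.
    by rewrite mulrN.
  move=> k kk0.
  have hk : (j0 == widen_ord hnm k) = false.
    apply/negbTE; rewrite -val_eqE /= eq_sym.
    by move: kk0; rewrite -val_eqE.
  have := (key (widen_ord hnm k)).1; rewrite hk mulr0 addr0 => /eqP.
  by rewrite subr_eq0 => /eqP ->; rewrite subrr mulr0.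
have c0 : 0 < (2 * alpha k0 / y ord0 j0) * eps.
  by apply: mulr_gt0 => //; exact: divr_gt0.
move: E; rewrite hL1 // hL2 // S2 subrr; lra.
Qed.

Theorem theorem5 (R : realType) (m n : nat) (hm : (2 < m)%N) (hn1 : (1 <= n)%N)
  (hnm : (n <= m)%N) (alpha : 'I_n -> R)
  (halpha : forall k, 0 < 2 * alpha k /\ 2 * alpha k < 1)
  (Om Gam : set 'rV[R]_m)
  (* Omega is a finite (bounded) domain in R_m^{n+} *)
  (hOm_open : open Om) (hOm_conn : connected Om) (hOm_ne : Om !=set0)
  (hOm_bdd : bounded_set Om) (hOm_orth : Om `<=` orthant hnm)
  (* Gamma is the part of the boundary of Omega lying in R_m^{n+}; the rest of
     the boundary lies on the hyperplanes x_k = 0 *)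
  (hGam : Gam = bdry Om `&` orthant hnm)
  (hLyap : lyapunov hnm Gam)
  (phi : 'rV[R]_m -> R) (tau : 'I_n -> 'rV[R]_m.-1 -> R)
  (hphi : {within closure Gam, continuous phi})
  (htau : forall k, {within tilde hnm k @` closure (Gamma_k hnm Om k),
                      continuous tau k})
  (hmatch : forall k x, closure Gam x -> closure (Gamma_k hnm Om k) x ->
              phi x = tau k (tilde hnm k x))
  (u1 u2 : 'rV[R]_m -> R)
  (hu1 : regular_solution hnm alpha Om u1)
  (hu2 : regular_solution hnm alpha Om u2)
  (hc1 : {within closure Om, continuous u1})
  (hc2 : {within closure Om, continuous u2})
  (hG1 : forall x, closure Gam x -> u1 x = phi x)
  (hG2 : forall x, closure Gam x -> u2 x = phi x)
  (hK1 : forall k x, closure (Gamma_k hnm Om k) x -> u1 x = tau k (tilde hnm k x))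
  (hK2 : forall k x, closure (Gamma_k hnm Om k) x -> u2 x = tau k (tilde hnm k x)) :
  forall x, closure Om x -> u1 x = u2 x.
Proof.
move=> x cx.
have ha k : 0 < 2 * alpha k := (halpha k).1.
have hcl k z : closure Om z -> 0 <= z ord0 (widen_ord hnm k).
  move=> cz.
  have cC : closed [set w : 'rV[R]_m | 0 <= w ord0 (widen_ord hnm k)].
    have := (continuous_closedP _).1 (@coord_continuous R 1 m ord0 (widen_ord hnm k)) _ (@closed_ge _ 0).
    exact.
  have e := proj1 (closure_id _) cC.
  have : closure [set w : 'rV[R]_m | 0 <= w ord0 (widen_ord hnm k)] z.
    by apply: (closureS _ cz) => w /hOm_orth /(_ k) /ltW.
  by rewrite -e.
have hbd z : closure Om z -> ~ Om z -> u1 z = u2 z.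
  move=> cz nz.
  have bz : bdry Om z by split => //; move/interior_subset.
  have [hpos|hneg] := pselect (forall k, 0 < z ord0 (widen_ord hnm k)).
    have gz : Gam z by rewrite hGam; split.
    by rewrite hG1 ?hG2 //; exact: subset_closure.
  move/existsNP: hneg => [k hk].
  have z0 : z ord0 (widen_ord hnm k) = 0.
    have := hcl k z cz; rewrite le_eqVlt => /orP [/eqP <- //| h].
    by exfalso; apply: hk.
  have gk : Gamma_k hnm Om k z by split.
  by rewrite (hK1 k z) ?(hK2 k z) //; exact: subset_closure.
apply: le_anti; apply/andP; split.
  apply: (@maxp R m n hn1 hnm alpha ha Om hOm_open hOm_bdd hOm_orth u1 u2 hu1 hu2 hc1 hc2 _ x cx).
  by move=> z cz nz; rewrite (hbd z cz nz).
apply: (@maxp R m n hn1 hnm alpha ha Om hOm_open hOm_bdd hOm_orth u2 u1 hu2 hu1 hc2 hc1 _ x cx).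
by move=> z cz nz; rewrite (hbd z cz nz).
Qed.
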